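(* There is a formula $A$ of $\mathsf{LTL}^{\ll}$ such that for every formula $B$ of $\mathsf{LTL}$ we have $\mathcal{L}_A \neq \mathcal{L}_B$.
   Context: Fix a set $\mathsf{Prop}$ of atomic propositions. Formulas of $\mathsf{LTL}^{\ll}$ are built from atomic propositions $P \in \mathsf{Prop}$ by $\lnot A$, $A \land B$, $\mathsf{X} A$, $A \mathbin{\mathsf{U}} B$ and $A \ll B$; formulas of $\mathsf{LTL}$ are those not containing $\ll$. A model $\sigma$ is an $\omega$-word $\sigma_0\sigma_1\sigma_2\ldots$ of sets of atomic propositions. Satisfaction is defined by: $\sigma,i \models P$ iff $P \in \sigma_i$; $\sigma,i\models \lnot A$ iff not $\sigma,i\models A$; $\sigma,i\models A\land B$ iff both hold; $\sigma,i\models \mathsf{X}A$ iff $\sigma,i+1\models A$; $\sigma,i\models A\mathbin{\mathsf{U}}B$ iff there is $j\ge i$ with $\sigma,j\models B$ and $\sigma,k\models A$ for all $i\le k<j$; $\sigma,i\models A\ll B$ iff for every $b$ there exists $j$ with $\mathrm{card}(A_\sigma^{i,j}) + b \le \mathrm{card}(B_\sigma^{i,j})$, where $A_\sigma^{i,j} := \{k \in \mathbb{N} : i \le k \le j,\ \sigma,k\models A\}$ (quantifiers over $b$, $j$ range over natural numbers). For a formula $A$ whose atomic propositions are $P_1,\dots,P_n$, its language is the $\omega$-language $\mathcal{L}_A := \{\sigma \in \Sigma^\omega : \sigma,0\models A\}$ over the alphabet $\Sigma := 2^{\{P_1,\dots,P_n\}}$. *)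

(* Defs.v *)
From Stdlib Require Import Arith List ClassicalEpsilon.
Import ListNotations.

Section LTLll.
Variable AP : Type.

Inductive formula : Type :=
  | FAtom : AP -> formula
  | FNot : formula -> formula
  | FAnd : formula -> formula -> formula
  | FX : formula -> formula
  | FU : formula -> formula -> formula
  | FLl : formula -> formula -> formula.

Fixpoint isLTL (A : formula) : Prop :=
  match A with
  | FAtom _ => True
  | FNot A => isLTL A
  | FAnd A B => isLTL A /\ isLTL B
  | FX A => isLTL A
  | FU A B => isLTL A /\ isLTL B
  | FLl _ _ => False
  end.

Fixpoint atoms (A : formula) : list AP :=
  match A with
  | FAtom p => [p]
  | FNot A => atoms A
  | FAnd A B => atoms A ++ atoms B
  | FX A => atoms A
  | FU A B => atoms A ++ atoms B
  | FLl A B => atoms A ++ atoms B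
  end.

(* A model: an omega-word of sets of atomic propositions;
   sigma i p = true  iff  p \in sigma_i *)
Definition word := nat -> AP -> bool.

Definition card_between (P : nat -> Prop) (i j : nat) : nat :=
  fold_right (fun k acc => (if excluded_middle_informative (P k) then 1 else 0) + acc)
    0 (seq i (S j - i)).

Fixpoint sat (s : word) (A : formula) (i : nat) : Prop :=
  match A with
  | FAtom p => s i p = true
  | FNot A => ~ sat s A i
  | FAnd A B => sat s A i /\ sat s B i
  | FX A => sat s A (S i)
  | FU A B => exists j, i <= j /\ sat s B j /\ (forall k, i <= k < j -> sat s A k)
  | FLl A B => forall b : nat, exists j : nat,
      card_between (sat s A) i j + b <= card_between (sat s B) i j
  end.

(* L_A : omega-words over the alphabet 2^{atoms of A} satisfying A at 0 *)
Definition lang (A : formula) (s : word) : Prop :=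
  (forall i p, s i p = true -> In p (atoms A)) /\ sat s A 0.

End LTLll.

Arguments FAtom {AP}. Arguments FNot {AP}. Arguments FAnd {AP}.
Arguments FX {AP}. Arguments FU {AP}. Arguments FLl {AP}.
Arguments isLTL {AP}. Arguments atoms {AP}. Arguments sat {AP}. Arguments lang {AP}.

(* Main.v *)
Require Import Defs.
From Stdlib Require Import Arith List ClassicalEpsilon Lia.
Import ListNotations.

Fixpoint xd {AP} (B : formula AP) : nat :=
  match B with
  | FAtom _ => 0
  | FNot A => xd A
  | FAnd A C => max (xd A) (xd C)
  | FX A => S (xd A)
  | FU A C => max (xd A) (xd C)
  | FLl A C => max (xd A) (xd C)
  end.

Definition good (N : nat) (t : nat -> bool) (r : nat -> nat) : Prop :=
  forall i, 1 <= r i /\ (2 <= r i -> t (S i) = t i /\ r (S i) = r i - 1)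
    /\ (r i = 1 -> t (S i) = negb (t i) /\ N <= r (S i)).

Definition mkw {AP} (p0 : AP) (t : nat -> bool) : word AP :=
  fun i q => if excluded_middle_informative (q = p0) then t i else false.

Lemma next_rel N K t1 r1 t2 r2 i j : good N t1 r1 -> good N t2 r2 -> 1 <= K -> S K <= N ->
  t1 i = t2 j -> min (r1 i) (S K) = min (r2 j) (S K) ->
  t1 (S i) = t2 (S j) /\ min (r1 (S i)) K = min (r2 (S j)) K.
Proof.
  intros G1 G2 HK0 HK Ht Hm.
  destruct (G1 i) as [a1 [a2 a3]]; destruct (G2 j) as [b1 [b2 b3]].
  destruct (Nat.eq_dec (r1 i) 1) as [e|e];
  [destruct (a3 e) as [c1 c2] | destruct (a2 ltac:(lia)) as [c1 c2]];
  (destruct (Nat.eq_dec (r2 j) 1) as [f|f];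
  [destruct (b3 f) as [d1 d2] | destruct (b2 ltac:(lia)) as [d1 d2]]);
  first [ split; [congruence | lia] | exfalso; lia ].
Qed.

Lemma U_cases N K t1 r1 t2 r2 i j : good N t1 r1 -> good N t2 r2 -> 1 <= K -> K <= N ->
  t1 i = t2 j -> min (r1 i) K = min (r2 j) K ->
  (t1 (S i) = t2 (S j) /\ min (r1 (S i)) K = min (r2 (S j)) K) \/
  (t1 (S i) = t2 j /\ min (r1 (S i)) K = min (r2 j) K) \/
  (t1 i = t2 (S j) /\ min (r1 i) K = min (r2 (S j)) K /\ r2 (S j) < r2 j).
Proof.
  intros G1 G2 HK1 HK Ht Hm.
  destruct (G1 i) as [a1 [a2 a3]]; destruct (G2 j) as [b1 [b2 b3]].
  destruct (Nat.eq_dec (r1 i) 1) as [e|e];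
  [destruct (a3 e) as [c1 c2] | destruct (a2 ltac:(lia)) as [c1 c2]];
  (destruct (Nat.eq_dec (r2 j) 1) as [f|f];
  [destruct (b3 f) as [d1 d2] | destruct (b2 ltac:(lia)) as [d1 d2]]);
  destruct (lt_eq_lt_dec (r1 i) (r2 j)) as [[lt|eq]|gt];
  first [ left; split; [congruence | lia]
        | right; left; split; [congruence | lia]
        | right; right; split; [congruence | split; lia]
        | exfalso; lia ].
Qed.

Lemma U_transfer N K t1 r1 t2 r2 (F1 P1 F2 P2 : nat -> Prop) :
  good N t1 r1 -> good N t2 r2 -> 1 <= K -> K <= N ->
  (forall i j, t1 i = t2 j -> min (r1 i) K = min (r2 j) K -> (F1 i <-> F2 j)) ->
  (forall i j, t1 i = t2 j -> min (r1 i) K = min (r2 j) K -> (P1 i <-> P2 j)) ->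
  forall i j, t1 i = t2 j -> min (r1 i) K = min (r2 j) K ->
  (exists w, i <= w /\ P1 w /\ (forall k, i <= k < w -> F1 k)) ->
  (exists w, j <= w /\ P2 w /\ (forall k, j <= k < w -> F2 k)).
Proof.
  intros G1 G2 HK1 HK HF HP.
  assert (main : forall D d, d <= D -> forall n i j, r2 j <= n -> t1 i = t2 j ->
     min (r1 i) K = min (r2 j) K -> P1 (i + d) -> (forall k, i <= k < i + d -> F1 k) ->
     exists w, j <= w /\ P2 w /\ (forall k, j <= k < w -> F2 k)).
  { induction D as [|D IHD]; intros d Hd n.
    - intros i j _ Ht Hm Hp _. exists j. replace (i + d) with i in Hp by lia.
      split; [lia|split; [apply (HP i j Ht Hm); auto| intros; lia]].
    - destruct d as [|d].
      + intros i j _ Ht Hm Hp _. exists j. replace (i + 0) with i in Hp by lia.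
        split; [lia|split; [apply (HP i j Ht Hm); auto| intros; lia]].
      + induction n as [|n IHn]; intros i j Hn Ht Hm Hp Hf;
        [destruct (G2 j); lia|].
        assert (Fi : F1 i) by (apply Hf; lia).
        assert (Fj : F2 j) by (apply (HF i j Ht Hm); auto).
        destruct (U_cases N K t1 r1 t2 r2 i j G1 G2 HK1 HK Ht Hm) as
          [[h1 h2] | [[h1 h2] | [h1 [h2 h3]]]].
        * destruct (IHD d ltac:(lia) (r2 (S j)) (S i) (S j) (le_n _) h1 h2)
            as [w [w1 [w2 w3]]].
          { replace (S i + d) with (i + S d) by lia; auto. }
          { intros k Hk; apply Hf; lia. }
          exists w; split; [lia|split; auto]. intros k Hk.
          destruct (Nat.eq_dec k j); [subst; auto | apply w3; lia].
        * apply (IHD d ltac:(lia) (r2 j) (S i) j (le_n _) h1 h2).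
          { replace (S i + d) with (i + S d) by lia; auto. }
          { intros k Hk; apply Hf; lia. }
        * destruct (IHn i (S j) ltac:(lia) h1 h2 Hp Hf) as [w [w1 [w2 w3]]].
          exists w; split; [lia|split; auto]. intros k Hk.
          destruct (Nat.eq_dec k j); [subst; auto | apply w3; lia]. }
  intros i j Ht Hm [w [w1 [w2 w3]]].
  apply (main (w - i) (w - i) (le_n _) (r2 j) i j (le_n _) Ht Hm).
  - replace (i + (w - i)) with w by lia; auto.
  - intros k Hk; apply w3; lia.
Qed.

Lemma mainL {AP} (p0 : AP) : forall B : formula AP, isLTL B ->
  forall K N t1 r1 t2 r2, xd B < K -> K <= N -> good N t1 r1 -> good N t2 r2 ->
  forall i j, t1 i = t2 j -> min (r1 i) K = min (r2 j) K ->
  (sat (mkw p0 t1) B i <-> sat (mkw p0 t2) B j).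
Proof.
  intros B; induction B; simpl; intros HB K N t1 r1 t2 r2 HK HKN G1 G2 i j Ht Hm.
  - unfold mkw. destruct (excluded_middle_informative (a = p0)); [rewrite Ht|]; tauto.
  - rewrite (IHB HB K N t1 r1 t2 r2 HK HKN G1 G2 i j Ht Hm). tauto.
  - destruct HB as [H1 H2].
    rewrite (IHB1 H1 K N t1 r1 t2 r2 ltac:(lia) HKN G1 G2 i j Ht Hm).
    rewrite (IHB2 H2 K N t1 r1 t2 r2 ltac:(lia) HKN G1 G2 i j Ht Hm). tauto.
  - destruct K as [|K]; [lia|].
    destruct (next_rel N K t1 r1 t2 r2 i j G1 G2 ltac:(lia) HKN Ht Hm) as [h1 h2].
    apply (IHB HB K N t1 r1 t2 r2 ltac:(lia) ltac:(lia) G1 G2 _ _ h1 h2).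
  - destruct HB as [H1 H2].
    assert (HF : forall i j, t1 i = t2 j -> min (r1 i) K = min (r2 j) K ->
       (sat (mkw p0 t1) B1 i <-> sat (mkw p0 t2) B1 j))
      by (intros; apply (IHB1 H1 K N t1 r1 t2 r2); auto; lia).
    assert (HP : forall i j, t1 i = t2 j -> min (r1 i) K = min (r2 j) K ->
       (sat (mkw p0 t1) B2 i <-> sat (mkw p0 t2) B2 j))
      by (intros; apply (IHB2 H2 K N t1 r1 t2 r2); auto; lia).
    split.
    + apply (U_transfer N K t1 r1 t2 r2 _ _ _ _ G1 G2 ltac:(lia) HKN HF HP i j Ht Hm).
    + apply (U_transfer N K t2 r2 t1 r1 _ _ _ _ G2 G1 ltac:(lia) HKN); auto.
      * intros i' j' a b; symmetry; apply HF; auto.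
      * intros i' j' a b; symmetry; apply HP; auto.
  - destruct HB.
Qed.

Definition step (a b : nat) (x : bool * nat * nat) : bool * nat * nat :=
  match x with (t, r, c) =>
    if r =? 1 then (if t then (false, b, c) else (true, a, S c)) else (t, r - 1, c)
  end.
Definition st a b n := Nat.iter n (step a b) (true, a, 0).
Definition tp a b n := fst (fst (st a b n)).
Definition rm a b n := snd (fst (st a b n)).
Definition cy a b n := snd (st a b n).

Lemma st_S a b n : st a b (S n) = step a b (st a b n).
Proof. reflexivity. Qed.

Lemma inv a b : 1 <= a -> 1 <= b -> forall n,
  (tp a b n = true /\ 1 <= rm a b n <= a) \/ (tp a b n = false /\ 1 <= rm a b n <= b).
Proof.
  intros Ha Hb n; induction n as [|n IH].
  - left; unfold tp, rm; simpl; lia.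
  - revert IH; unfold tp, rm; rewrite st_S; destruct (st a b n) as [[t r] c]; simpl.
    unfold step; destruct (Nat.eqb_spec r 1); destruct t; simpl; lia.
Qed.

Lemma good_st N a b : 1 <= N -> N <= a -> N <= b -> good N (tp a b) (rm a b).
Proof.
  intros HN Ha Hb i. pose proof (inv a b ltac:(lia) ltac:(lia) i) as H.
  revert H; unfold tp, rm; rewrite st_S; destruct (st a b i) as [[t r] c]; simpl.
  unfold step; destruct (Nat.eqb_spec r 1); destruct t; simpl; intuition lia.
Qed.

Lemma inv2 a b (cp cn : nat -> nat) : 1 <= b -> b <= a ->
  cp 0 = 0 -> cn 0 = 0 ->
  (forall n, cp (S n) = cp n + (if tp a b n then 1 else 0)) ->
  (forall n, cn (S n) = cn n + (if tp a b n then 0 else 1)) ->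
  forall n, (tp a b n = true -> cn n + a <= cp n + rm a b n) /\
            (tp a b n = false -> cn n + rm a b n <= cp n).
Proof.
  intros Hb Hab H0 H1 HS1 HS2 n; induction n as [|n IH].
  - rewrite H0, H1; unfold tp, rm; simpl; split; intros; lia.
  - rewrite HS1, HS2. pose proof (inv a b ltac:(lia) Hb n) as Iv.
    revert IH Iv; unfold tp, rm; rewrite st_S;
    destruct (st a b n) as [[t r] c]; simpl.
    unfold step; destruct (Nat.eqb_spec r 1); destruct t; simpl; intuition (try discriminate; lia).
Qed.

Lemma inv1 a (cp cn : nat -> nat) : 1 <= a ->
  cp 0 = 0 -> cn 0 = 0 ->
  (forall n, cp (S n) = cp n + (if tp a (S a) n then 1 else 0)) ->
  (forall n, cn (S n) = cn n + (if tp a (S a) n then 0 else 1)) ->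
  forall n, (tp a (S a) n = true -> cn n + a = cp n + cy a (S a) n + rm a (S a) n) /\
            (tp a (S a) n = false -> cn n + rm a (S a) n = cp n + cy a (S a) n + 1).
Proof.
  intros Ha H0 H1 HS1 HS2 n; induction n as [|n IH].
  - rewrite H0, H1; unfold tp, rm, cy; simpl; split; intros; lia.
  - rewrite HS1, HS2. pose proof (inv a (S a) Ha ltac:(lia) n) as Iv.
    revert IH Iv; unfold tp, rm, cy; rewrite st_S;
    destruct (st a (S a) n) as [[t r] c]; simpl.
    unfold step; destruct (Nat.eqb_spec r 1); destruct t; simpl; intuition (try discriminate; lia).
Qed.

Lemma iter_block a b : forall r t c, 1 <= r ->
  Nat.iter r (step a b) (t, r, c) = if t then (false, b, c) else (true, a, S c).
Proof.
  induction r as [|r IH]; intros t c Hr; [lia|].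
  destruct r as [|r].
  - destruct t; reflexivity.
  - rewrite Nat.iter_succ_r. simpl (step a b (t, S (S r), c)).
    replace (r - 0) with r by lia. apply IH; lia.
Qed.

Lemma st_period a b : 1 <= a -> 1 <= b -> forall k, st a b (k * (a + b)) = (true, a, k).
Proof.
  intros Ha Hb k; induction k as [|k IH]; [reflexivity|].
  replace (S k * (a + b)) with (b + (a + k * (a + b))) by lia.
  unfold st in *. rewrite !Nat.iter_add, IH, iter_block by lia.
  rewrite iter_block by lia. reflexivity.
Qed.

Definition cnt (P : nat -> Prop) n :=
  fold_right (fun k acc => (if excluded_middle_informative (P k) then 1 else 0) + acc)
    0 (seq 0 n).

Lemma fold_add (P : nat -> Prop) : forall l x,
  fold_right (fun k acc => (if excluded_middle_informative (P k) then 1 else 0) + acc) x l =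
  fold_right (fun k acc => (if excluded_middle_informative (P k) then 1 else 0) + acc) 0 l + x.
Proof. induction l as [|y l IH]; intros x; simpl; [reflexivity|]. rewrite IH; lia. Qed.

Lemma cnt_S P n : cnt P (S n) = cnt P n + (if excluded_middle_informative (P n) then 1 else 0).
Proof.
  unfold cnt. rewrite seq_S, fold_right_app. simpl. rewrite fold_add. lia.
Qed.

Lemma mkw_p0 {AP} (p0 : AP) t k : mkw p0 t k p0 = t k.
Proof. unfold mkw; destruct (excluded_middle_informative (p0 = p0)); congruence. Qed.

Lemma cnt_p {AP} (p0 : AP) t n :
  cnt (sat (mkw p0 t) (FAtom p0)) (S n) = cnt (sat (mkw p0 t) (FAtom p0)) n + (if t n then 1 else 0).
Proof.
  rewrite cnt_S. f_equal. destruct excluded_middle_informative as [h|h]; simpl in h;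
  rewrite mkw_p0 in h; destruct (t n); congruence.
Qed.

Lemma cnt_n {AP} (p0 : AP) t n :
  cnt (sat (mkw p0 t) (FNot (FAtom p0))) (S n) =
  cnt (sat (mkw p0 t) (FNot (FAtom p0))) n + (if t n then 0 else 1).
Proof.
  rewrite cnt_S. f_equal. destruct excluded_middle_informative as [h|h]; simpl in h;
  rewrite mkw_p0 in h; destruct (t n); first [reflexivity | exfalso; apply h; reflexivity | exfalso; apply h; discriminate].
Qed.

Theorem mainTheorem2 (AP : Type) (p0 : AP) :
  exists A : formula AP,
    forall B : formula AP, isLTL B ->
      ~ (forall s : word AP, lang A s <-> lang B s).
Proof.
  exists (FLl (FAtom p0) (FNot (FAtom p0))).
  intros B HB Heq.
  set (N := S (xd B)).
  set (s1 := mkw p0 (tp N (S N))).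
  set (s2 := mkw p0 (tp (S N) N)).
  assert (atomsA : forall t i p, mkw p0 t i p = true -> In p (atoms (FLl (FAtom p0) (FNot (FAtom p0))))).
  { intros t i p; unfold mkw; destruct excluded_middle_informative; [subst; simpl; auto | discriminate]. }
  assert (L1 : lang (FLl (FAtom p0) (FNot (FAtom p0))) s1).
  { split; [apply atomsA|]. simpl. intros bb.
    set (a := N).
    pose proof (inv1 a (cnt (sat s1 (FAtom p0))) (cnt (sat s1 (FNot (FAtom p0))))
       ltac:(unfold a, N; lia) eq_refl eq_refl (cnt_p p0 _) (cnt_n p0 _)) as I.
    set (n := (bb + a) * (a + S a)).
    exists (n - 1).
    change (cnt (sat s1 (FAtom p0)) (S (n - 1)) + bb <= cnt (sat s1 (FNot (FAtom p0))) (S (n - 1))).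
    replace (S (n - 1)) with n by (unfold n, a, N; lia).
    destruct (I n) as [I1 _].
    assert (E : st a (S a) n = (true, a, bb + a)) by (apply st_period; unfold a, N; lia).
    unfold tp, rm, cy in I1; rewrite E in I1; cbn [fst snd] in I1. specialize (I1 eq_refl). lia. }
  apply Heq in L1. destruct L1 as [At1 S1].
  assert (Hin : In p0 (atoms B)).
  { apply (At1 0 p0). unfold s1; rewrite mkw_p0. reflexivity. }
  assert (S2 : sat s2 B 0).
  { unfold s1 in S1; unfold s2.
    apply (proj1 (mainL p0 B HB N N (tp N (S N)) (rm N (S N)) (tp (S N) N) (rm (S N) N)
      ltac:(unfold N; lia) (le_n _) (good_st N N (S N) ltac:(unfold N; lia) ltac:(lia) ltac:(lia))
      (good_st N (S N) N ltac:(unfold N; lia) ltac:(lia) ltac:(lia)) 0 0 eq_refl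
      ltac:(change (min N N = min (S N) N); lia))). exact S1. }
  assert (L2 : lang B s2).
  { split; [|exact S2]. intros i p; unfold s2, mkw; destruct excluded_middle_informative;
    [subst; auto | discriminate]. }
  apply Heq in L2. destruct L2 as [_ A2]. simpl in A2.
  destruct (A2 1) as [j Hj].
  change (cnt (sat s2 (FAtom p0)) (S j) + 1 <= cnt (sat s2 (FNot (FAtom p0))) (S j)) in Hj.
  pose proof (inv2 (S N) N (cnt (sat s2 (FAtom p0))) (cnt (sat s2 (FNot (FAtom p0))))
       ltac:(unfold N; lia) ltac:(lia) eq_refl eq_refl (cnt_p p0 _) (cnt_n p0 _) (S j)) as [I1 I2].
  destruct (inv (S N) N ltac:(lia) ltac:(unfold N; lia) (S j)) as [[T R]|[T R]].
  - specialize (I1 T); lia.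
  - specialize (I2 T); lia.
Qed.
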